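(* (McDiarmid's inequality under Poisson sampling.) Let $k\ge1$ and $n\ge 1$ be integers, $\vec p$ a probability distribution on $[k]$, and $\hat f:[k]^*\to\mathbb{R}$ an estimator whose sensitivity satisfies $1/n\le S(\hat f)<\infty$. Let $N\sim\mathrm{Poi}(n)$ and, conditionally on $N$, let $X^N$ be $N$ i.i.d. samples from $\vec p$. Then for every $\varepsilon\in(0,1)$, \[ \Pr\Big(\big|\hat f(X^N)-\mathbb{E}[\hat f(X^N)]\big|>\varepsilon\Big)\le 4\exp\Big(-\frac{\varepsilon^2}{2n\,(4S(\hat f))^2}\Big). \]
   Context: $[k]:=\{1,\dots,k\}$ and $[k]^*$ is the set of finite sequences over $[k]$ (including the empty sequence). The sensitivity of $\hat f$ is \[ S(\hat f):=\sup\{|\hat f(x)-\hat f(y)| : x,y\in[k]^*,\ y \text{ is obtained from } x \text{ by changing, inserting, or deleting a single symbol}\}. \] *)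

(* Defs.v *)
From Stdlib Require Import Reals List Arith Factorial.
Import ListNotations.
Open Scope R_scope.

Definition valid_word (k : nat) (w : list nat) : Prop :=
  Forall (fun a => (1 <= a <= k)%nat) w.

Definition neighbor (k : nat) (x y : list nat) : Prop :=
  (exists (a c : list nat) (i j : nat),
      x = a ++ i :: c /\ y = a ++ j :: c)
  \/ (exists (a c : list nat) (j : nat),
      x = a ++ c /\ y = a ++ j :: c)
  \/ (exists (a c : list nat) (j : nat),
      x = a ++ j :: c /\ y = a ++ c).

(* The set of values |f x - f y| over neighbouring words in [k]^*;
   the sensitivity S(f) is its supremum. *)
Definition sens_set (k : nat) (f : list nat -> R) (r : R) : Prop :=
  exists x y, valid_word k x /\ valid_word k y /\ neighbor k x y /\
              r = Rabs (f x - f y).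

Definition prob_dist (k : nat) (p : nat -> R) : Prop :=
  (forall i, (1 <= i <= k)%nat -> 0 <= p i) /\
  fold_right Rplus 0 (map p (seq 1 k)) = 1.

Fixpoint words (k m : nat) : list (list nat) :=
  match m with
  | O => [ [] ]
  | S m' => flat_map (fun a => map (cons a) (words k m')) (seq 1 k)
  end.

Definition word_prob (p : nat -> R) (w : list nat) : R :=
  fold_right (fun a r => p a * r) 1 w.

Definition poisson (n m : nat) : R :=
  exp (- INR n) * INR n ^ m / INR (fact m).

(* Contribution of samples of length m to E[g(X^N)], N ~ Poi(n),
   X^N | N i.i.d. from p:  P(N = m) * sum_{|w| = m} P(w) g(w). *)
Definition poisson_term (k n : nat) (p : nat -> R) (g : list nat -> R) (m : nat) : R :=
  poisson n m * fold_right Rplus 0 (map (fun w => word_prob p w * g w) (words k m)).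

(* Main.v *)
Require Import Defs.
From Stdlib Require Import Reals List Lra Lia Psatz Arith.
Import ListNotations.
Open Scope R_scope.

Lemma Rabs_le_between a b : Rabs a <= b -> -b <= a <= b.
Proof. unfold Rabs; destruct (Rcase_abs a); lra. Qed.

Definition lsum {A : Type} (l : list A) (g : A -> R) : R := fold_right Rplus 0 (map g l).

Lemma lsum_app {A} (l1 l2 : list A) g : lsum (l1 ++ l2) g = lsum l1 g + lsum l2 g.
Proof. induction l1; simpl; unfold lsum in *; simpl; [lra|]. rewrite IHl1; lra. Qed.

Lemma lsum_map {A B} (h : A -> B) l g : lsum (map h l) g = lsum l (fun x => g (h x)).
Proof. unfold lsum; now rewrite map_map. Qed.

Lemma lsum_flat_map {A B} (F : A -> list B) l g :
  lsum (flat_map F l) g = lsum l (fun a => lsum (F a) g).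
Proof. induction l; simpl; [reflexivity|]. rewrite lsum_app, IHl. reflexivity. Qed.

Lemma lsum_ext {A} (l : list A) g1 g2 : (forall x, In x l -> g1 x = g2 x) -> lsum l g1 = lsum l g2.
Proof. induction l; intros H; simpl; [reflexivity|]. unfold lsum in *; simpl.
  rewrite H by (left; auto). rewrite IHl; auto. intros; apply H; right; auto. Qed.

Lemma lsum_le {A} (l : list A) g1 g2 : (forall x, In x l -> g1 x <= g2 x) -> lsum l g1 <= lsum l g2.
Proof. induction l; intros H; unfold lsum in *; simpl; [lra|].
  apply Rplus_le_compat; [apply H; left; auto| apply IHl; intros; apply H; right; auto]. Qed.

Lemma lsum_plus {A} (l : list A) g1 g2 : lsum l (fun x => g1 x + g2 x) = lsum l g1 + lsum l g2.
Proof. induction l; unfold lsum in *; simpl; [lra|]. rewrite IHl; lra. Qed.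

Lemma lsum_minus {A} (l : list A) g1 g2 : lsum l (fun x => g1 x - g2 x) = lsum l g1 - lsum l g2.
Proof. induction l; unfold lsum in *; simpl; [lra|]. rewrite IHl; lra. Qed.

Lemma lsum_scal {A} (l : list A) c g : lsum l (fun x => c * g x) = c * lsum l g.
Proof. induction l; unfold lsum in *; simpl; [lra|]. rewrite IHl; lra. Qed.

Lemma lsum_const0 {A} (l : list A) : lsum l (fun _ => 0) = 0.
Proof. induction l; unfold lsum in *; simpl; [lra|]. rewrite IHl; lra. Qed.

Lemma lsum_bound {A} (l : list A) (q g : A -> R) C :
  (forall x, In x l -> 0 <= q x) -> (forall x, In x l -> Rabs (g x) <= C) ->
  Rabs (lsum l (fun x => q x * g x)) <= C * lsum l q.
Proof.
  intros Hq Hg. rewrite <- lsum_scal. apply Rabs_le. split.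
  - replace (- lsum l (fun x => C * q x)) with (lsum l (fun x => -1 * (C * q x)))
      by (rewrite lsum_scal; ring).
    apply lsum_le. intros x Hx. specialize (Hq x Hx). specialize (Hg x Hx).
    apply Rabs_le_between in Hg. nra.
  - apply lsum_le. intros x Hx. specialize (Hq x Hx). specialize (Hg x Hx).
    apply Rabs_le_between in Hg. rewrite Rmult_comm. apply Rmult_le_compat_r; lra.
Qed.
Section Words.
Variable k : nat.
Variable p : nat -> R.
Hypothesis Hpos : forall i, (1 <= i <= k)%nat -> 0 <= p i.
Hypothesis Hsum : lsum (seq 1 k) p = 1.

Definition Ew (m : nat) (phi : list nat -> R) : R :=
  lsum (words k m) (fun w => word_prob p w * phi w).

Lemma in_seq1 a : In a (seq 1 k) -> (1 <= a <= k)%nat.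
Proof. rewrite in_seq. lia. Qed.

Lemma words_valid m w : In w (words k m) -> valid_word k w /\ length w = m.
Proof.
  revert w; induction m; intros w H; simpl in H.
  - destruct H as [<-|[]]. split; [constructor|reflexivity].
  - apply in_flat_map in H. destruct H as [a [Ha Hw]].
    apply in_map_iff in Hw. destruct Hw as [w' [<- Hw']].
    destruct (IHm w' Hw'). split; [constructor; auto; apply in_seq1; auto| simpl; auto].
Qed.

Lemma word_prob_nonneg w : valid_word k w -> 0 <= word_prob p w.
Proof. induction 1; simpl; [lra|]. apply Rmult_le_pos; auto. Qed.

Lemma Ew_S m phi : Ew (S m) phi = lsum (seq 1 k) (fun a => p a * Ew m (fun w => phi (a :: w))).
Proof.
  unfold Ew. simpl. rewrite lsum_flat_map. apply lsum_ext. intros a _.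
  rewrite lsum_map. rewrite <- lsum_scal. apply lsum_ext. intros w _. simpl. ring.
Qed.

Lemma Ew_0 phi : Ew 0 phi = phi [].
Proof. unfold Ew, lsum; simpl. ring. Qed.

Lemma Ew_plus m g1 g2 : Ew m (fun w => g1 w + g2 w) = Ew m g1 + Ew m g2.
Proof. unfold Ew. rewrite <- lsum_plus. apply lsum_ext; intros; ring. Qed.

Lemma Ew_scal m c g : Ew m (fun w => c * g w) = c * Ew m g.
Proof. unfold Ew. rewrite <- lsum_scal. apply lsum_ext; intros; ring. Qed.

Lemma Ew_ext m g1 g2 : (forall w, valid_word k w -> g1 w = g2 w) -> Ew m g1 = Ew m g2.
Proof. intros H. unfold Ew. apply lsum_ext. intros w Hw. rewrite H; auto. apply (words_valid m); auto. Qed.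

Lemma Ew_le m g1 g2 : (forall w, valid_word k w -> length w = m -> g1 w <= g2 w) -> Ew m g1 <= Ew m g2.
Proof. intros H. unfold Ew. apply lsum_le. intros w Hw. destruct (words_valid m w Hw).
  apply Rmult_le_compat_l; [apply word_prob_nonneg; auto| apply H; auto]. Qed.

Lemma Ew_one m : lsum (words k m) (word_prob p) = 1.
Proof.
  induction m.
  - unfold lsum; simpl; ring.
  - transitivity (Ew (S m) (fun _ => 1)). { unfold Ew. apply lsum_ext; intros; ring. }
    rewrite Ew_S. transitivity (lsum (seq 1 k) p); [|exact Hsum]. apply lsum_ext. intros a _.
    simpl. replace (Ew m (fun _ => 1)) with 1; [ring|].
    unfold Ew. symmetry. etransitivity; [|exact IHm]. apply lsum_ext; intros; ring.
Qed.

Lemma Ew_const m c : Ew m (fun _ => c) = c.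
Proof. unfold Ew. transitivity (c * lsum (words k m) (word_prob p)).
  - rewrite <- lsum_scal. apply lsum_ext; intros; ring.
  - rewrite Ew_one; ring. Qed.

Lemma Ew_bound m g C : (forall w, valid_word k w -> length w = m -> Rabs (g w) <= C) -> Rabs (Ew m g) <= C.
Proof. intros H. unfold Ew. replace C with (C * lsum (words k m) (word_prob p)) by (rewrite Ew_one; ring).
  apply lsum_bound.
  - intros w Hw; apply word_prob_nonneg, (words_valid m); auto.
  - intros w Hw; destruct (words_valid m w Hw); auto. Qed.

Lemma psum_bound (g : nat -> R) C : (forall a, In a (seq 1 k) -> Rabs (g a) <= C) ->
  Rabs (lsum (seq 1 k) (fun a => p a * g a)) <= C.
Proof. intros H. replace C with (C * lsum (seq 1 k) p) by (rewrite Hsum; ring). apply lsum_bound; auto.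
  intros; apply Hpos, in_seq1; auto. Qed.

End Words.

Lemma exp_bound y : y <= 1/4 -> exp y <= 1 + y + 4/3 * y^2.
Proof.
  intros Hy. pose proof (exp_ineq1_le (-y)) as H.
  assert (Hp : 0 < exp y) by apply exp_pos.
  assert (Hm : exp y * exp (- y) = 1) by (rewrite <- exp_plus; replace (y + - y) with 0 by ring; apply exp_0).
  nra.
Qed.

Lemma valid_app k l1 l2 : valid_word k l1 -> valid_word k l2 -> valid_word k (l1 ++ l2).
Proof. intros; apply Forall_app; auto. Qed.

Section Lip.
Variable k : nat.
Variable p : nat -> R.
Variable f : list nat -> R.
Variable Sc : R.
Hypothesis Hpos : forall i, (1 <= i <= k)%nat -> 0 <= p i.
Hypothesis Hsum : lsum (seq 1 k) p = 1.
Hypothesis HS : forall x y, valid_word k x -> valid_word k y -> neighbor k x y -> Rabs (f x - f y) <= Sc.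

Lemma lip_change pre a b w : valid_word k pre -> (1 <= a <= k)%nat -> (1 <= b <= k)%nat -> valid_word k w ->
  Rabs (f (pre ++ a :: w) - f (pre ++ b :: w)) <= Sc.
Proof. intros. apply HS.
  - apply valid_app; auto; constructor; auto.
  - apply valid_app; auto; constructor; auto.
  - left. exists pre, w, a, b. auto. Qed.

Lemma lip_del a w : valid_word k (a :: w) -> Rabs (f (a :: w) - f w) <= Sc.
Proof. intros H. apply HS; auto. inversion H; auto. right; right. exists [], w, a. auto. Qed.

Lemma S_nonneg : valid_word k [] -> 0 <= Sc.
Proof. intros. Abort.

Lemma f_len w : valid_word k w -> Rabs (f w - f []) <= Sc * INR (length w).
Proof.
  induction w as [|a w IH]; intros H.
  - simpl. rewrite Rminus_diag, Rabs_R0. lra.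
  - simpl length. rewrite S_INR. inversion H; subst.
    pose proof (lip_del a w H). specialize (IH H3).
    apply Rabs_le_between in H0. apply Rabs_le_between in IH. apply Rabs_le. lra.
Qed.

Lemma h_step m : Rabs (Ew k p (S m) f - Ew k p m f) <= Sc.
Proof.
  rewrite Ew_S. replace (Ew k p m f) with (lsum (seq 1 k) (fun a => p a * Ew k p m f))
    by (symmetry; transitivity (lsum (seq 1 k) (fun a => Ew k p m f * p a));
        [rewrite lsum_scal, Hsum; ring | apply lsum_ext; intros; ring]).
  replace (lsum (seq 1 k) (fun a => p a * Ew k p m (fun w => f (a :: w))) -
    lsum (seq 1 k) (fun a => p a * Ew k p m f))
  with (lsum (seq 1 k) (fun a => p a * Ew k p m (fun w => f (a :: w) - f w))).
  - apply psum_bound; auto. intros a Ha. apply Ew_bound; auto. intros w Hw _.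
    apply lip_del. constructor; auto. apply in_seq1; auto.
  - rewrite <- lsum_minus. apply lsum_ext. intros a _.
    rewrite (Ew_ext k p m (fun w => f (a :: w) - f w) (fun w => f (a :: w) + (-1) * f w))
      by (intros; ring).
    rewrite Ew_plus, Ew_scal. ring.
Qed.


Lemma h_lip_aux j d : Rabs (Ew k p (j + d) f - Ew k p j f) <= Sc * INR d.
Proof.
  induction d.
  - rewrite Nat.add_0_r, Rminus_diag, Rabs_R0. simpl; lra.
  - rewrite Nat.add_succ_r, S_INR. pose proof (h_step (j + d)).
    apply Rabs_le_between in H. apply Rabs_le_between in IHd. apply Rabs_le. lra.
Qed.

Lemma h_lip m j : Rabs (Ew k p m f - Ew k p j f) <= Sc * Rabs (INR m - INR j).
Proof.
  destruct (Nat.le_ge_cases j m) as [H|H].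
  - replace m with (j + (m - j))%nat by lia. rewrite plus_INR.
    replace (INR j + INR (m - j) - INR j) with (INR (m - j)) by ring.
    rewrite (Rabs_right (INR (m - j))) by (apply Rle_ge, pos_INR). apply h_lip_aux.
  - replace j with (m + (j - m))%nat by lia. rewrite plus_INR.
    replace (INR m - (INR m + INR (j - m))) with (- INR (j - m)) by ring.
    rewrite Rabs_Ropp, (Rabs_right (INR (j - m))) by (apply Rle_ge, pos_INR).
    rewrite Rabs_minus_sym. apply h_lip_aux.
Qed.

Lemma hoeff_step (psi : nat -> R) lam :
  Rabs lam * Sc <= 1/4 ->
  (forall a b, In a (seq 1 k) -> In b (seq 1 k) -> Rabs (psi a - psi b) <= Sc) ->
  lsum (seq 1 k) (fun a => p a * exp (lam * psi a)) <=
  exp (lam * lsum (seq 1 k) (fun a => p a * psi a) + 4/3 * (Rabs lam * Sc)^2).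
Proof.
  intros Ht Hpsi. set (pb := lsum (seq 1 k) (fun a => p a * psi a)).
  set (t := Rabs lam * Sc) in *.
  assert (Hdev : forall a, In a (seq 1 k) -> Rabs (lam * (psi a - pb)) <= t).
  { intros a Ha. unfold t. rewrite Rabs_mult. apply Rmult_le_compat_l; [apply Rabs_pos|].
    replace (psi a - pb) with (lsum (seq 1 k) (fun b => p b * (psi a - psi b))).
    - apply psum_bound; auto.
    - unfold pb. transitivity (lsum (seq 1 k) (fun b => psi a * p b - p b * psi b)).
      + apply lsum_ext; intros; ring.
      + rewrite lsum_minus, lsum_scal, Hsum. ring. }
  apply Rle_trans with (lsum (seq 1 k) (fun a => exp (lam * pb) * (p a * (1 + lam * (psi a - pb) + 4/3 * t^2)))).
  - apply lsum_le. intros a Ha. specialize (Hdev a Ha).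
    assert (Hp : 0 <= p a) by (apply Hpos, in_seq1; auto).
    replace (lam * psi a) with (lam * pb + lam * (psi a - pb)) by ring.
    rewrite exp_plus.
    apply Rabs_le_between in Hdev.
    pose proof (exp_bound (lam * (psi a - pb))) as Hb.
    assert (Hsq : (lam * (psi a - pb))^2 <= t^2) by nra.
    pose proof (exp_pos (lam * pb)).
    assert (exp (lam * (psi a - pb)) <= 1 + lam * (psi a - pb) + 4/3 * t^2) by (apply Rle_trans with (1 := Hb ltac:(lra)); nra).
    replace (p a * (exp (lam * pb) * exp (lam * (psi a - pb)))) with (exp (lam * pb) * (p a * exp (lam * (psi a - pb)))) by ring.
    apply Rmult_le_compat_l; [lra|]. apply Rmult_le_compat_l; auto.
  - rewrite lsum_scal. rewrite exp_plus. apply Rmult_le_compat_l; [left; apply exp_pos|].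
    transitivity (lsum (seq 1 k) (fun a => (1 + 4/3 * t^2) * p a + lam * (p a * psi a) - (lam * pb) * p a)).
    + right. apply lsum_ext; intros; ring.
    + rewrite lsum_minus, lsum_plus, !lsum_scal, Hsum. fold pb.
      replace ((1 + 4 / 3 * t ^ 2) * 1 + lam * pb - lam * pb * 1) with (1 + 4/3 * t^2) by ring.
      apply exp_ineq1_le.
Qed.

Lemma azuma lam : Rabs lam * Sc <= 1/4 ->
  forall m pre, valid_word k pre ->
  Ew k p m (fun w => exp (lam * f (pre ++ w))) <=
  exp (lam * Ew k p m (fun w => f (pre ++ w)) + 4/3 * INR m * (Rabs lam * Sc)^2).
Proof.
  intros Ht m. induction m; intros pre Hpre.
  - rewrite !Ew_0, app_nil_r. simpl. right. f_equal. ring.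
  - rewrite !Ew_S.
    set (psi := fun a => Ew k p m (fun w => f ((pre ++ [a]) ++ w))).
    assert (E1 : lsum (seq 1 k) (fun a => p a * Ew k p m (fun w => f (pre ++ a :: w))) =
                 lsum (seq 1 k) (fun a => p a * psi a)).
    { apply lsum_ext; intros a _. unfold psi. f_equal. apply Ew_ext. intros.
      rewrite <- app_assoc. reflexivity. }
    rewrite E1.
    apply Rle_trans with (lsum (seq 1 k) (fun a => exp (4/3 * INR m * (Rabs lam * Sc)^2) * (p a * exp (lam * psi a)))).
    + apply lsum_le. intros a Ha.
      assert (Hp : 0 <= p a) by (apply Hpos, in_seq1; auto).
      assert (Hv : valid_word k (pre ++ [a])) by (apply valid_app; auto; constructor; [apply in_seq1; auto|constructor]).
      specialize (IHm _ Hv).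
      rewrite (Ew_ext k p m (fun w => exp (lam * f (pre ++ a :: w))) (fun w => exp (lam * f ((pre ++ [a]) ++ w))))
        by (intros; rewrite <- app_assoc; reflexivity).
      fold (psi a) in IHm. rewrite exp_plus in IHm.
      replace (exp (4/3 * INR m * (Rabs lam * Sc)^2) * (p a * exp (lam * psi a))) with
        (p a * (exp (lam * psi a) * exp (4/3 * INR m * (Rabs lam * Sc)^2))) by ring.
      apply Rmult_le_compat_l; auto.
    + rewrite lsum_scal.
      assert (H := hoeff_step psi lam Ht).
      assert (Hl : lsum (seq 1 k) (fun a => p a * exp (lam * psi a)) <=
        exp (lam * lsum (seq 1 k) (fun a => p a * psi a) + 4/3 * (Rabs lam * Sc)^2)).
      { apply H. intros a b Ha Hb. unfold psi.
        rewrite (Ew_ext k p m (fun w => f ((pre ++ [a]) ++ w)) (fun w => f (pre ++ a :: w)))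
          by (intros; rewrite <- app_assoc; reflexivity).
        rewrite (Ew_ext k p m (fun w => f ((pre ++ [b]) ++ w)) (fun w => f (pre ++ b :: w)))
          by (intros; rewrite <- app_assoc; reflexivity).
        rewrite (Ew_ext k p m (fun w => f (pre ++ a :: w)) (fun w => f (pre ++ a :: w) + (-1) * f (pre ++ b :: w) + f (pre ++ b :: w)))
          by (intros; ring).
        rewrite !Ew_plus, Ew_scal.
        replace (Ew k p m (fun w => f (pre ++ a :: w)) + -1 * Ew k p m (fun w => f (pre ++ b :: w)) +
          Ew k p m (fun w => f (pre ++ b :: w)) - Ew k p m (fun w => f (pre ++ b :: w)))
          with (Ew k p m (fun w => f (pre ++ a :: w) + -1 * f (pre ++ b :: w))) by (rewrite Ew_plus, Ew_scal; ring).
        apply Ew_bound; auto. intros w Hw _.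
        replace (f (pre ++ a :: w) + -1 * f (pre ++ b :: w)) with (f (pre ++ a :: w) - f (pre ++ b :: w)) by ring.
        apply lip_change; auto; apply in_seq1; auto. }
      rewrite S_INR.
      replace (lam * lsum (seq 1 k) (fun a => p a * psi a) + 4 / 3 * (INR m + 1) * (Rabs lam * Sc) ^ 2)
        with (4/3 * INR m * (Rabs lam * Sc)^2 + (lam * lsum (seq 1 k) (fun a => p a * psi a) + 4/3 * (Rabs lam * Sc)^2)) by ring.
      rewrite (exp_plus (4/3 * INR m * _)).
      apply Rmult_le_compat_l; [left; apply exp_pos| exact Hl].
Qed.

End Lip.

From Coquelicot Require Import Coquelicot.
Notation iser := (@is_series R_AbsRing R_NormedModule).

Lemma exp_mono x y : x <= y -> exp x <= exp y.
Proof. intros [H|H]; [left; apply exp_increasing; auto| subst; lra]. Qed.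

Lemma ser_scal (a : nat -> R) l c : iser a l -> iser (fun n => c * a n) (c * l).
Proof. intros H. exact (is_series_scal c a l H). Qed.

Lemma ser_plus (a b : nat -> R) la lb : iser a la -> iser b lb -> iser (fun n => a n + b n) (la + lb).
Proof. intros Ha Hb. exact (is_series_plus a b la lb Ha Hb). Qed.

Lemma ser_ext (a b : nat -> R) l : (forall n, a n = b n) -> iser a l -> iser b l.
Proof. intros H Ha. apply (is_series_ext a b l H Ha). Qed.

Lemma ser_le (a b : nat -> R) la lb : iser a la -> iser b lb -> (forall n, a n <= b n) -> la <= lb.
Proof.
  intros Ha Hb H. apply is_series_Reals in Ha. apply is_series_Reals in Hb.
  eapply Rle_cv_lim; [|exact Ha|exact Hb].
  intros N. induction N; simpl; auto. apply Rplus_le_compat; auto.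
Qed.

Lemma ser_ex_le (a b : nat -> R) lb : (forall n, 0 <= a n <= b n) -> iser b lb -> exists la, iser a la.
Proof.
  intros H Hb. exists (Series a). apply Series_correct.
  apply (ex_series_le a b). - intros n. specialize (H n). rewrite Rabs_right; lra.
  - exists lb; exact Hb.
Qed.

Lemma exp_pow_INR s m : exp (s * INR m) = exp s ^ m.
Proof. induction m. - simpl. rewrite Rmult_0_r; apply exp_0.
  - rewrite S_INR; change (exp s ^ S m) with (exp s * exp s ^ m); rewrite <- IHm, <- exp_plus. f_equal. ring. Qed.

Lemma poisson_nonneg n m : 0 <= poisson n m.
Proof. unfold poisson. apply Rmult_le_pos; [apply Rmult_le_pos; [left; apply exp_pos| apply pow_le, pos_INR]|].
  left; apply Rinv_0_lt_compat, lt_0_INR, lt_O_fact. Qed.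

Lemma poisson_mgf n s : iser (fun m => poisson n m * exp (s * INR m)) (exp (INR n * (exp s - 1))).
Proof.
  pose proof (proj2_sig (exist_exp (INR n * exp s))) as H. change (exp_in (INR n * exp s) (exp (INR n * exp s))) in H.
  unfold exp_in in H. apply is_series_Reals in H.
  apply (ser_scal _ _ (exp (- INR n))) in H.
  replace (exp (INR n * (exp s - 1))) with (exp (- INR n) * exp (INR n * exp s))
    by (rewrite <- exp_plus; f_equal; ring).
  revert H. apply ser_ext. intros m. unfold poisson. rewrite exp_pow_INR, Rpow_mult_distr. unfold Rdiv. ring.
Qed.

Lemma pois_sum n : iser (fun m => poisson n m) 1.
Proof. pose proof (poisson_mgf n 0) as H. rewrite exp_0 in H.
  replace (exp (INR n * (1 - 1))) with 1 in H by (replace (INR n * (1 - 1)) with 0 by ring; rewrite exp_0; auto).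
  revert H. apply ser_ext. intros m. rewrite Rmult_0_l, exp_0. ring. Qed.

Lemma two_exp x t d : 0 <= t -> x <= t * Rabs d -> exp x <= exp (t * d) + exp (- (t * d)).
Proof. intros Ht H. pose proof (exp_pos (t * d)). pose proof (exp_pos (- (t * d))).
  unfold Rabs in H. destruct (Rcase_abs d).
  - assert (exp x <= exp (- (t * d))) by (apply exp_mono; lra). lra.
  - assert (exp x <= exp (t * d)) by (apply exp_mono; lra). lra. Qed.

Lemma pair_bound t c1 s1 c2 s2 : 0 <= t <= 3/32 ->
  c1 + s1 = 0 -> s1^2 <= t^2 -> c2 + s2 = 4/3 * t^2 -> s2^2 <= 81/64 * t^2 -> s1 <= 1/4 -> s2 <= 1/4 ->
  c1 + c2 + (exp s1 - 1) + (exp s2 - 1) <= 16/3 * t^2.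
Proof. intros Ht H1 H2 H3 H4 H5 H6. pose proof (exp_bound s1 H5). pose proof (exp_bound s2 H6). nra. Qed.

Lemma pair_exp n t c1 s1 c2 s2 : 0 <= t <= 3/32 ->
  c1 + s1 = 0 -> s1^2 <= t^2 -> c2 + s2 = 4/3 * t^2 -> s2^2 <= 81/64 * t^2 -> s1 <= 1/4 -> s2 <= 1/4 ->
  exp (c1 * INR n) * exp (INR n * (exp s1 - 1)) * (exp (c2 * INR n) * exp (INR n * (exp s2 - 1)))
  <= exp (16/3 * INR n * t^2).
Proof. intros. rewrite <- !exp_plus. apply exp_mono.
  pose proof (pair_bound t c1 s1 c2 s2 H H0 H1 H2 H3 H4 H5). pose proof (pos_INR n).
  replace (c1 * INR n + INR n * (exp s1 - 1) + (c2 * INR n + INR n * (exp s2 - 1)))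
    with (INR n * (c1 + c2 + (exp s1 - 1) + (exp s2 - 1))) by ring.
  replace (16 / 3 * INR n * t ^ 2) with (INR n * (16/3 * t^2)) by ring.
  apply Rmult_le_compat_l; auto. Qed.

Section MGF.
Variable k : nat.
Variable p : nat -> R.
Variable f : list nat -> R.
Variable Sc : R.
Variable n : nat.
Variable E : R.
Hypothesis Hpos : forall i, (1 <= i <= k)%nat -> 0 <= p i.
Hypothesis Hsum : lsum (seq 1 k) p = 1.
Hypothesis HS : forall x y, valid_word k x -> valid_word k y -> neighbor k x y -> Rabs (f x - f y) <= Sc.
Hypothesis HSc : 0 <= Sc.
Hypothesis HE : iser (fun m => poisson n m * Ew k p m f) E.

Lemma lip_n lam m : Rabs lam * Sc >= 0 ->
  lam * (Ew k p m f - Ew k p n f) <= Rabs lam * Sc * Rabs (INR m - INR n).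
Proof. intros _. pose proof (h_lip k p f Sc Hpos Hsum HS m n) as H.
  apply Rle_trans with (Rabs (lam * (Ew k p m f - Ew k p n f))); [apply Rle_abs|].
  rewrite Rabs_mult, Rmult_assoc. apply Rmult_le_compat_l; auto. apply Rabs_pos. Qed.


Lemma sq_bound t : 0 <= t <= 3/32 -> (t + 4/3 * t^2)^2 <= 81/64 * t^2 /\ (- t + 4/3 * t^2)^2 <= 81/64 * t^2.
Proof. intros H. assert (Hu : 0 <= 1 + 4/3 * t <= 9/8) by lra. assert (Hu2 : 0 <= 1 - 4/3 * t <= 9/8) by lra.
  replace ((t + 4/3 * t^2)^2) with (t^2 * (1 + 4/3 * t)^2) by ring.
  replace ((- t + 4/3 * t^2)^2) with (t^2 * (1 - 4/3 * t)^2) by ring.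
  assert (0 <= t^2) by nra.
  assert (A1 : (1 + 4/3 * t)^2 <= 81/64) by nra. assert (A2 : (1 - 4/3 * t)^2 <= 81/64) by nra.
  split; [apply (Rmult_le_compat_l (t^2)) in A1 | apply (Rmult_le_compat_l (t^2)) in A2]; lra. Qed.

Ltac discharge B := repeat (match type of B with ?A -> _ =>
     let H := fresh in assert (H : A) by (first [ring | lra | nra | apply sq_bound; lra]); specialize (B H); clear H end).

Lemma mgf lam : Rabs lam * Sc <= 3/32 ->
  exists M, iser (fun m => poisson n m * Ew k p m (fun w => exp (lam * (f w - E)))) M /\
            M <= 4 * exp (16/3 * INR n * (Rabs lam * Sc)^2).
Proof.
  intros Ht.
  assert (Ht0 : 0 <= Rabs lam * Sc) by (apply Rmult_le_pos; [apply Rabs_pos| auto]).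
  set (t := Rabs lam * Sc) in *.
  set (hn := Ew k p n f).
  set (a1 := t + 4/3 * t^2). set (a2 := - t + 4/3 * t^2).
  set (P := fun s => exp (INR n * (exp s - 1))).
  set (U := fun m => exp (- lam * E) * exp (lam * hn) *
      (exp (- t * INR n) * (poisson n m * exp (a1 * INR m)) + exp (t * INR n) * (poisson n m * exp (a2 * INR m)))).
  assert (HU : iser U (exp (- lam * E) * exp (lam * hn) * (exp (- t * INR n) * P a1 + exp (t * INR n) * P a2))).
  { apply ser_scal. apply ser_plus; apply ser_scal; apply poisson_mgf. }
  set (T := fun m => poisson n m * Ew k p m (fun w => exp (lam * (f w - E)))).
  assert (HT : forall m, 0 <= T m <= U m).
  { intros m. unfold T, U.
    assert (Eq1 : Ew k p m (fun w => exp (lam * (f w - E))) = exp (- lam * E) * Ew k p m (fun w => exp (lam * f ([] ++ w)))).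
    { rewrite <- Ew_scal. apply Ew_ext. intros w _. simpl. rewrite <- exp_plus. f_equal. ring. }
    pose proof (azuma k p f Sc Hpos Hsum HS lam ltac:(unfold t in *; lra) m [] (Forall_nil _)) as Haz.
    change (Ew k p m (fun w => f ([] ++ w))) with (Ew k p m f) in Haz. fold t in Haz.
    pose proof (poisson_nonneg n m) as Hpi.
    assert (Hnn : 0 <= Ew k p m (fun w => exp (lam * (f w - E)))).
    { rewrite <- (Ew_const k p Hsum m 0). apply Ew_le; auto. intros; left; apply exp_pos. }
    split; [apply Rmult_le_pos; auto|].
    rewrite Eq1.
    assert (Hsplit : exp (lam * Ew k p m f + 4/3 * INR m * t^2) =
       exp (lam * hn) * exp (lam * (Ew k p m f - hn)) * exp (4/3 * INR m * t^2)).
    { rewrite <- !exp_plus. f_equal. ring. }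
    assert (H2 := two_exp (lam * (Ew k p m f - hn)) t (INR m - INR n) Ht0 (lip_n lam m (Rle_ge _ _ Ht0))).
    assert (Eqa : (exp (t * (INR m - INR n)) + exp (- (t * (INR m - INR n)))) * exp (4/3 * INR m * t^2) =
       exp (- t * INR n) * exp (a1 * INR m) + exp (t * INR n) * exp (a2 * INR m)).
    { rewrite Rmult_plus_distr_r, <- !exp_plus. unfold a1, a2. f_equal; f_equal; ring. }
    pose proof (exp_pos (- lam * E)). pose proof (exp_pos (lam * hn)). pose proof (exp_pos (4/3 * INR m * t^2)).
    apply Rle_trans with (poisson n m * (exp (- lam * E) * (exp (lam * hn) *
       ((exp (t * (INR m - INR n)) + exp (- (t * (INR m - INR n)))) * exp (4/3 * INR m * t^2))))).
    - apply Rmult_le_compat_l; auto. apply Rmult_le_compat_l; [lra|].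
      apply Rle_trans with (1 := Haz). rewrite Hsplit. rewrite Rmult_assoc.
      apply Rmult_le_compat_l; [lra|]. apply Rmult_le_compat_r; lra.
    - rewrite Eqa. right. ring. }
  destruct (ser_ex_le T U _ HT HU) as [M HM].
  exists M. split; [exact HM|].
  assert (HMU := ser_le T U _ _ HM HU (fun m => proj2 (HT m))).
  (* Jensen *)
  set (L := fun m => exp (- lam * E) * ((1 + lam * E) * poisson n m + (- lam) * (poisson n m * Ew k p m f))).
  assert (HL : iser L (exp (- lam * E) * ((1 + lam * E) * 1 + (- lam) * E))).
  { apply ser_scal. apply ser_plus; apply ser_scal; [apply pois_sum| exact HE]. }
  set (V := fun m => exp (- lam * hn) * (exp (- t * INR n) * (poisson n m * exp (t * INR m)) +
      exp (t * INR n) * (poisson n m * exp (- t * INR m)))).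
  assert (HV : iser V (exp (- lam * hn) * (exp (- t * INR n) * P t + exp (t * INR n) * P (- t)))).
  { apply ser_scal. apply ser_plus; apply ser_scal; apply poisson_mgf. }
  assert (HLV : forall m, L m <= V m).
  { intros m. unfold L, V. pose proof (poisson_nonneg n m) as Hpi.
    pose proof (exp_ineq1_le (- lam * (Ew k p m f - E))) as Hx.
    assert (Hj : exp (- lam * E) * (1 + - lam * (Ew k p m f - E)) <= exp (- lam * hn) * exp (- lam * (Ew k p m f - hn))).
    { rewrite <- exp_plus. replace (- lam * hn + - lam * (Ew k p m f - hn)) with (- lam * E + - lam * (Ew k p m f - E)) by ring.
      rewrite exp_plus. apply Rmult_le_compat_l; [left; apply exp_pos| lra]. }
    assert (H2 := two_exp (- lam * (Ew k p m f - hn)) t (INR m - INR n) Ht0).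
    assert (H2' : - lam * (Ew k p m f - hn) <= t * Rabs (INR m - INR n)).
    { pose proof (lip_n (- lam) m) as Hl. unfold t. rewrite Rabs_Ropp in Hl. apply Hl. apply Rle_ge. exact Ht0. }
    specialize (H2 H2').
    assert (Eqa : exp (t * (INR m - INR n)) + exp (- (t * (INR m - INR n))) =
       exp (- t * INR n) * exp (t * INR m) + exp (t * INR n) * exp (- t * INR m)).
    { rewrite <- !exp_plus. f_equal; f_equal; ring. }
    pose proof (exp_pos (- lam * hn)).
    apply Rle_trans with (poisson n m * (exp (- lam * E) * (1 + - lam * (Ew k p m f - E)))); [right; ring|].
    apply Rle_trans with (poisson n m * (exp (- lam * hn) * (exp (t * (INR m - INR n)) + exp (- (t * (INR m - INR n)))))).
    - apply Rmult_le_compat_l; auto. apply Rle_trans with (1 := Hj). apply Rmult_le_compat_l; lra.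
    - rewrite Eqa. right. ring. }
  assert (HJ := ser_le L V _ _ HL HV HLV).
  replace (exp (- lam * E) * ((1 + lam * E) * 1 + - lam * E)) with (exp (- lam * E)) in HJ by ring.
  set (Q := exp (- t * INR n) * P t + exp (t * INR n) * P (- t)) in *.
  set (R0 := exp (- t * INR n) * P a1 + exp (t * INR n) * P a2) in *.
  assert (HR0 : 0 <= R0) by (unfold R0, P; pose proof (exp_pos (- t * INR n)); pose proof (exp_pos (t * INR n));
     pose proof (exp_pos (INR n * (exp a1 - 1))); pose proof (exp_pos (INR n * (exp a2 - 1))); nra).
  assert (HQR : M <= Q * R0).
  { apply Rle_trans with (1 := HMU).
    replace (Q * R0) with (exp (- lam * hn) * Q * exp (lam * hn) * R0)
      by (rewrite Rmult_comm with (r1 := exp (- lam * hn)), Rmult_assoc with (r1 := Q), <- exp_plus;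
          replace (- lam * hn + lam * hn) with 0 by ring; rewrite exp_0; ring).
    rewrite Rmult_assoc with (r1 := exp (- lam * E)).
    rewrite Rmult_assoc with (r1 := exp (- lam * hn) * Q).
    apply Rmult_le_compat_r; [apply Rmult_le_pos; [left; apply exp_pos| auto]| exact HJ]. }
  apply Rle_trans with (1 := HQR). unfold Q, R0, P.
  assert (Htt : 0 <= t <= 3/32) by lra.
  unfold a1, a2 in *.
  pose proof (pair_exp n t (- t) t (- t) (t + 4/3 * t^2) Htt) as B1.
  pose proof (pair_exp n t (- t) t t (- t + 4/3 * t^2) Htt) as B2.
  pose proof (pair_exp n t t (- t) (- t) (t + 4/3 * t^2) Htt) as B3.
  pose proof (pair_exp n t t (- t) t (- t + 4/3 * t^2) Htt) as B4.
  discharge B1. discharge B2. discharge B3. discharge B4.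
  rewrite Rmult_plus_distr_l, !Rmult_plus_distr_r. lra.
Qed.

End MGF.

Lemma ser_ex_abs (a b : nat -> R) lb : (forall n, Rabs (a n) <= b n) -> iser b lb -> exists la, iser a la.
Proof.
  intros H Hb. exists (Series a). apply Series_correct.
  apply (ex_series_le a b). - intros n. apply H.
  - exists lb; exact Hb.
Qed.

Lemma E_exists k p f Sc n :
  (forall i, (1 <= i <= k)%nat -> 0 <= p i) -> lsum (seq 1 k) p = 1 ->
  (forall x y, valid_word k x -> valid_word k y -> neighbor k x y -> Rabs (f x - f y) <= Sc) ->
  0 <= Sc -> exists E, iser (fun m => poisson n m * Ew k p m f) E.
Proof.
  intros Hpos Hsum HS HSc.
  apply (ser_ex_abs _ (fun m => (Rabs (f []) + Sc) * (poisson n m * exp (1 * INR m))) ((Rabs (f []) + Sc) * exp (INR n * (exp 1 - 1)))).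
  2: { apply ser_scal, poisson_mgf. }
  intros m. rewrite Rabs_mult, (Rabs_right (poisson n m)) by (apply Rle_ge, poisson_nonneg).
  pose proof (poisson_nonneg n m). rewrite Rmult_1_l.
  assert (Hm : INR m <= exp (INR m)) by (pose proof (exp_ineq1_le (INR m)); lra).
  assert (H1 : 1 <= exp (INR m)) by (pose proof (exp_ineq1_le (INR m)); pose proof (pos_INR m); lra).
  assert (Hb : Rabs (Ew k p m f) <= Rabs (f []) + Sc * INR m).
  { apply Ew_bound; auto. intros w Hw Hl. pose proof (f_len k f Sc HS w Hw) as Hf. rewrite Hl in Hf.
    pose proof (Rabs_triang (f w - f []) (f [])) as Htr. replace (f w - f [] + f []) with (f w) in Htr by ring.
    lra. }
  pose proof (Rabs_pos (f [])).
  assert (Rabs (Ew k p m f) <= (Rabs (f []) + Sc) * exp (INR m)) by nra.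
  replace ((Rabs (f []) + Sc) * (poisson n m * exp (INR m))) with (poisson n m * ((Rabs (f []) + Sc) * exp (INR m))) by ring.
  apply Rmult_le_compat_l; auto.
Qed.

Theorem mainTheorem7 (k n : nat) (p : nat -> R) (f : list nat -> R) (S eps : R) :
  (1 <= k)%nat -> (1 <= n)%nat ->
  prob_dist k p ->
  is_lub (sens_set k f) S ->
  1 / INR n <= S ->
  0 < eps < 1 ->
  exists E Pr : R,
    infinite_sum (poisson_term k n p f) E /\
    infinite_sum
      (poisson_term k n p
         (fun w => if Rlt_dec eps (Rabs (f w - E)) then 1 else 0)) Pr /\
    Pr <= 4 * exp (- (eps ^ 2 / (2 * INR n * (4 * S) ^ 2))).
Proof.
  intros Hk Hn [Hpos Hsum] [Hub _] HSn Heps.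
  change (fold_right Rplus 0 (map p (seq 1 k))) with (lsum (seq 1 k) p) in Hsum.
  assert (HS : forall x y, valid_word k x -> valid_word k y -> neighbor k x y -> Rabs (f x - f y) <= S).
  { intros x y Hx Hy Hxy. apply Hub. exists x, y. auto. }
  assert (Hn0 : 0 < INR n) by (apply lt_0_INR; lia).
  assert (HnS : 1 <= INR n * S).
  { apply (Rmult_le_compat_l (INR n)) in HSn; [|lra]. unfold Rdiv in HSn.
    rewrite Rmult_1_l, Rinv_r in HSn; lra. }
  assert (HSp : 0 < S) by nra.
  destruct (E_exists k p f S n Hpos Hsum HS ltac:(lra)) as [E HE].
  set (ind := fun w => if Rlt_dec eps (Rabs (f w - E)) then 1 else 0).
  set (lam := 3 * eps / (32 * INR n * S^2)).
  assert (Hlam : 0 < lam) by (unfold lam; apply Rdiv_lt_0_compat; [lra| nra]).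
  assert (Ht : Rabs lam * S = 3 * eps / (32 * INR n * S)).
  { rewrite Rabs_right by lra. unfold lam. field. lra. }
  assert (Ht' : Rabs lam * S <= 3/32).
  { rewrite Ht. apply Rmult_le_reg_r with (32 * INR n * S); [nra|].
    unfold Rdiv. rewrite Rmult_assoc, Rinv_l by nra. nra. }
  destruct (mgf k p f S n E Hpos Hsum HS ltac:(lra) HE lam Ht') as [M1 [HM1 HM1b]].
  assert (Ht2 : Rabs (- lam) * S <= 3/32) by (rewrite Rabs_Ropp; exact Ht').
  destruct (mgf k p f S n E Hpos Hsum HS ltac:(lra) HE (- lam) Ht2) as [M2 [HM2 HM2b]].
  rewrite Rabs_Ropp in HM2b.
  set (I := fun m => poisson n m * Ew k p m ind).
  assert (Hind : forall w, 0 <= ind w <= 1).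
  { intros w. unfold ind. destruct (Rlt_dec _ _); lra. }
  assert (HI : forall m, 0 <= I m <= poisson n m).
  { intros m. unfold I. pose proof (poisson_nonneg n m).
    assert (0 <= Ew k p m ind <= 1).
    { rewrite <- (Ew_const k p Hsum m 0) at 1. rewrite <- (Ew_const k p Hsum m 1).
      split; apply Ew_le; auto; intros; apply Hind. }
    split; nra. }
  destruct (ser_ex_le I _ _ HI (pois_sum n)) as [Pr HPr].
  exists E, Pr. split; [apply is_series_Reals; exact HE|]. split; [apply is_series_Reals; exact HPr|].
  assert (HPr1 : Pr <= 1) by (apply (ser_le I _ _ _ HPr (pois_sum n)); intros; apply HI).
  set (T1 := fun m => poisson n m * Ew k p m (fun w => exp (lam * (f w - E)))).
  set (T2 := fun m => poisson n m * Ew k p m (fun w => exp (- lam * (f w - E)))).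
  assert (HPr2 : Pr <= exp (- lam * eps) * (M1 + M2)).
  { apply (ser_le I (fun m => exp (- lam * eps) * (T1 m + T2 m)) _ _ HPr).
    - apply ser_scal, ser_plus; assumption.
    - intros m. unfold I, T1, T2. pose proof (poisson_nonneg n m).
      replace (exp (- lam * eps) * (poisson n m * Ew k p m (fun w => exp (lam * (f w - E))) +
               poisson n m * Ew k p m (fun w => exp (- lam * (f w - E)))))
        with (poisson n m * Ew k p m (fun w => exp (- lam * eps) * exp (lam * (f w - E)) + exp (- lam * eps) * exp (- lam * (f w - E))))
        by (rewrite Ew_plus, !Ew_scal; ring).
      apply Rmult_le_compat_l; auto. apply Ew_le; auto. intros w _ _.
      unfold ind. rewrite <- !exp_plus.
      pose proof (exp_pos (- lam * eps + lam * (f w - E))). pose proof (exp_pos (- lam * eps + - lam * (f w - E))).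
      destruct (Rlt_dec eps (Rabs (f w - E))) as [Hl|Hl]; [|lra].
      unfold Rabs in Hl. destruct (Rcase_abs (f w - E)).
      + assert (1 <= exp (- lam * eps + - lam * (f w - E))); [|lra].
        rewrite <- exp_0. apply exp_mono. nra.
      + assert (1 <= exp (- lam * eps + lam * (f w - E))); [|lra].
        rewrite <- exp_0. apply exp_mono. nra. }
  set (x := eps^2 / (64 * INR n * S^2)).
  assert (Hexp : exp (- lam * eps) * exp (16 / 3 * INR n * (Rabs lam * S) ^ 2) = exp (- x) * exp (- x) * exp (- x)).
  { rewrite <- !exp_plus. f_equal. rewrite Ht. unfold x, lam. field. nra. }
  assert (Htarget : exp (- (eps ^ 2 / (2 * INR n * (4 * S) ^ 2))) = exp (- x) * exp (- x)).
  { rewrite <- exp_plus. f_equal. unfold x. field. nra. }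
  rewrite Htarget.
  pose proof (exp_pos (- x)) as Hv. set (v := exp (- x)) in *.
  pose proof (exp_pos (- lam * eps)).
  assert (Pr <= 8 * (v * v * v)).
  { rewrite <- Hexp. apply Rle_trans with (1 := HPr2). nra. }
  destruct (Rle_dec v (1/2)); nra.
Qed.
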